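(* Let $n$ be even, and let $S^{[1]},S^{[2]}\subset\mathbb F_2^n$ be disjoint sets with $\#S^{[1]}+\#S^{[2]}<2^n$. Let $f^*_{[1]}:S^{[1]}\to\mathbb F_2$ and $f^*_{[2]}:S^{[2]}\to\mathbb F_2$ be arbitrary, and define $W:\mathbb F_2^n\to\mathbb Z$ by $W(u)=0$ for $u\notin S^{[1]}\cup S^{[2]}$, $W(u)=(-1)^{f^*_{[1]}(u)}2^{(n+2)/2}$ for $u\in S^{[1]}$, $W(u)=(-1)^{f^*_{[2]}(u)}2^{n/2}$ for $u\in S^{[2]}$. For $i=1,2$ put $X_i(u)=\sum_{\omega\in S^{[i]}}(-1)^{f^*_{[i]}(\omega)\oplus u\cdot\omega}$. Then there exists a Boolean function $f:\mathbb F_2^n\to\mathbb F_2$ with $W_f=W$ if and only if for every $u\in\mathbb F_2^n$ there is $\varepsilon_u\in\{0,1\}$ with $2X_1(u)+X_2(u)=(-1)^{\varepsilon_u}2^{n/2}$.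
   Context: For $f:\mathbb F_2^n\to\mathbb F_2$, $W_f(\omega)=\sum_{x\in\mathbb F_2^n}(-1)^{f(x)\oplus\omega\cdot x}$, where $\omega\cdot x$ is the usual dot product over $\mathbb F_2$. *)

(* Defs.v *)
From HB Require Import structures.
From mathcomp Require Import all_boot all_order all_algebra.
Set Implicit Arguments. Unset Strict Implicit. Unset Printing Implicit Defensive.
Import Order.TTheory GRing.Theory Num.Theory.
Local Open Scope ring_scope.

(* Elements of F_2^n, represented as finite functions 'I_n -> bool
   (bool = F_2, with addb = xor and andb = multiplication). *)
Definition bvec (n : nat) := {ffun 'I_n -> bool}.

Definition dotb (n : nat) (w x : bvec n) : bool :=
  \big[addb/false]_(i < n) (w i && x i).

Definition sgnb (b : bool) : int := (-1) ^+ b.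

Definition walsh (n : nat) (f : bvec n -> bool) (w : bvec n) : int :=
  \sum_(x : bvec n) sgnb (f x (+) dotb w x).

Definition Wpres (n : nat) (S1 S2 : {set bvec n}) (f1 f2 : bvec n -> bool)
  (u : bvec n) : int :=
  if u \in S1 then sgnb (f1 u) * (2 ^+ (n./2).+1)
  else if u \in S2 then sgnb (f2 u) * (2 ^+ n./2)
  else 0.

Definition Xsum (n : nat) (S : {set bvec n}) (fs : bvec n -> bool) (u : bvec n) : int :=
  \sum_(w in S) sgnb (fs w (+) dotb u w).

(* Main.v *)
Require Import Defs.
From HB Require Import structures.
From mathcomp Require Import all_boot all_order all_algebra.
From mathcomp Require Import zify ring.
Import Order.TTheory GRing.Theory Num.Theory.
Local Open Scope ring_scope.

Section Aux.
Variable n : nat.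
Implicit Types w x y u v : bvec n.

Definition bxor x y : bvec n := [ffun i => x i (+) y i].
Definition bz : bvec n := [ffun => false].
Definition be (i : 'I_n) : bvec n := [ffun j => j == i].

Lemma dotbC w x : dotb w x = dotb x w.
Proof. by rewrite /dotb; apply: eq_bigr => i _; rewrite andbC. Qed.

Lemma dotbD w x y : dotb w (bxor x y) = dotb w x (+) dotb w y.
Proof.
rewrite /dotb -big_split /=; apply: eq_bigr => i _; rewrite ffunE.
by case: (w i).
Qed.

Lemma dotb_e w i : dotb w (be i) = w i.
Proof.
rewrite /dotb (bigD1 i) //= big1 ?ffunE ?eqxx ?andbT ?addbF // => j /negbTE.
by rewrite ffunE => ->; rewrite andbF.
Qed.

Lemma dotb_z w : dotb w bz = false.
Proof. by rewrite /dotb big1 // => i _; rewrite ffunE andbF. Qed.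

Lemma sgnbD a b : sgnb (a (+) b) = sgnb a * sgnb b.
Proof. by case: a; case: b; rewrite /sgnb /= ?expr0 ?expr1 ?mulr1 ?mul1r ?mulrNN. Qed.

Lemma sgnbN a : sgnb (~~ a) = - sgnb a.
Proof. by case: a; rewrite /sgnb /= ?expr0 ?expr1 ?opprK. Qed.

Lemma bxor_eq0 x y : (bxor x y == bz) = (x == y).
Proof.
apply/eqP/eqP => [H|->].
  apply/ffunP => i; have := congr1 (fun f : bvec n => f i) H.
  by rewrite !ffunE; case: (x i); case: (y i).
by apply/ffunP => i; rewrite !ffunE addbb.
Qed.

Lemma card_bvec : #|{: bvec n}| = (2 ^ n)%N.
Proof. by rewrite card_ffun card_bool card_ord. Qed.

Lemma orth w : \sum_(u : bvec n) sgnb (dotb u w) = if w == bz then 2 ^+ n else 0.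
Proof.
case: eqP => [->|/eqP wn0].
  under eq_bigr do rewrite dotb_z.
  by rewrite sumr_const card_bvec /sgnb expr0 natrX.
have [i wi] : exists i, w i.
  case: (boolP [exists i, w i]) => [/existsP //|/existsPn H].
  by case/eqP: wn0; apply/ffunP => i; rewrite ffunE; apply/negbTE.
set S := \sum_u _.
have inj : injective (fun x => bxor x (be i)).
  move=> a b /= H; apply/ffunP => j.
  have := congr1 (fun f : bvec n => f j) H; rewrite !ffunE.
  by case: (a j); case: (b j); case: (j == i).
have HS : S = - S.
  rewrite {2}/S -sumrN /S (reindex_inj inj) /=; apply: eq_bigr => u _.
  by rewrite dotbC dotbD dotb_e wi addbT sgnbN dotbC.
lia.
Qed.

Lemma inversion (g : bvec n -> int) y :
  \sum_(u : bvec n) (\sum_(x : bvec n) g x * sgnb (dotb u x)) * sgnb (dotb u y)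
  = 2 ^+ n * g y.
Proof.
under eq_bigr do rewrite big_distrl /=.
rewrite exchange_big /=.
under eq_bigr => x _.
  under eq_bigr do rewrite -mulrA -sgnbD -dotbD.
  rewrite -big_distrr /= orth bxor_eq0.
  over.
rewrite (bigD1 y) //= eqxx big1 ?addr0; first by rewrite mulrC.
by move=> x /negbTE ->; rewrite mulr0.
Qed.

End Aux.

Theorem mainTheorem2 (n : nat) (S1 S2 : {set bvec n}) (f1 f2 : bvec n -> bool) :
  ~~ odd n ->
  [disjoint S1 & S2] ->
  (#|S1| + #|S2| < 2 ^ n)%N ->
  (exists f : bvec n -> bool, forall u, walsh f u = Wpres S1 S2 f1 f2 u) <->
  (forall u : bvec n, exists eps : bool,
      2 * Xsum S1 f1 u + Xsum S2 f2 u = sgnb eps * 2 ^+ n./2).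
Proof.
move=> ev dis _.
set k := n./2.
have nk : n = (k + k)%N by rewrite addnn /k; rewrite -{1}(odd_double_half n) (negbTE ev).
have e2n : (2 : int) ^+ n = 2 ^+ k * 2 ^+ k by rewrite {1}nk exprD.
have k0 : (2 : int) ^+ k != 0 by rewrite expf_neq0.
have P : forall y, \sum_(u : bvec n) Wpres S1 S2 f1 f2 u * sgnb (dotb u y)
     = 2 ^+ k * (2 * Xsum S1 f1 y + Xsum S2 f2 y).
  move=> y.
  rewrite (bigID (fun u => u \in S1)) /=.
  rewrite [X in _ + X](bigID (fun u => u \in S2)) /=.
  rewrite [X in _ + (_ + X)]big1 ?addr0; last first.
    by move=> u /andP[/negbTE h1 /negbTE h2]; rewrite /Wpres h1 h2 mul0r.
  have -> : \sum_(i | (i \notin S1) && (i \in S2)) Wpres S1 S2 f1 f2 i * sgnb (dotb i y)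
       = \sum_(i in S2) Wpres S1 S2 f1 f2 i * sgnb (dotb i y).
    apply: eq_bigl => u; case h2: (u \in S2); rewrite ?andbF ?andbT //.
    by rewrite (disjointFl dis h2).
  rewrite mulrDr /Xsum mulrA !mulr_sumr; congr (_ + _); apply: eq_bigr => u hu.
    rewrite /Wpres hu sgnbD dotbC exprS; ring.
  have h1 : u \notin S1 by rewrite (disjointFl dis hu).
  rewrite /Wpres (negbTE h1) hu sgnbD dotbC; ring.
split.
  move=> [f Hf] y; exists (f y).
  have := @inversion n (fun x => sgnb (f x)) y.
  under eq_bigr => u _.
    have -> : \sum_x sgnb (f x) * sgnb (dotb u x) = walsh f u.
      by rewrite /walsh; apply: eq_bigr => x _; rewrite sgnbD.
    rewrite Hf. over.
  rewrite P e2n -mulrA => /(mulfI k0) ->; ring.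
move=> H.
exists (fun y => 2 * Xsum S1 f1 y + Xsum S2 f2 y < 0) => u.
have Hs : forall y, sgnb (2 * Xsum S1 f1 y + Xsum S2 f2 y < 0) * 2 ^+ k
                = 2 * Xsum S1 f1 y + Xsum S2 f2 y.
  move=> y; have [e ->] := H y.
  have kp : (0 : int) < 2 ^+ k by rewrite exprn_gt0.
  case: e; rewrite /sgnb /=.
    by rewrite expr1 mulN1r oppr_lt0 kp /= expr1 mulN1r.
  by rewrite expr0 mul1r ltNge (ltW kp) /= expr0 mul1r.
have n0 : (2 : int) ^+ n != 0 by rewrite expf_neq0.
apply: (mulfI n0).
rewrite -(@inversion n (Wpres S1 S2 f1 f2) u) /walsh mulr_sumr; apply: eq_bigr => x _.
rewrite sgnbD mulrA e2n -[2 ^+ k * 2 ^+ k * _]mulrA [2 ^+ k * sgnb _]mulrC Hs -P.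
by apply: congr2; [apply: eq_bigr => v _; rewrite dotbC | rewrite dotbC].
Qed.
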